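(* Let $\mathscr{H}=\mathscr{H}_L\oplus\mathscr{H}_C\oplus\mathscr{H}_R$ be an orthogonal decomposition of a Hilbert space, and let $U$ be a unitary operator on $\mathscr{H}$ of the form $U=(U_{LC}\oplus\mathbb{1}_{\mathscr{H}_R})(\mathbb{1}_{\mathscr{H}_L}\oplus U_{CR})$, where $U_{LC}$ is unitary on $\mathscr{H}_{LC}=\mathscr{H}_L\oplus\mathscr{H}_C$ and $U_{CR}$ is unitary on $\mathscr{H}_{CR}=\mathscr{H}_C\oplus\mathscr{H}_R$. Let $V=V_L\oplus\mathscr{H}_C\oplus V_R$ where $V_L\subset\mathscr{H}_L$ and $V_R\subset\mathscr{H}_R$ are closed subspaces, and put $V_{LC}=V_L\oplus\mathscr{H}_C$, $V_{CR}=\mathscr{H}_C\oplus V_R$. Then the $U$-Schur function $f_V$ of $V$ factorizes as $$f_V=(\mathbb{1}_{V_L}\oplus f^R_{V_{CR}})(f^L_{V_{LC}}\oplus\mathbb{1}_{V_R}),$$ where $f^L_{V_{LC}}$ is the $U_{LC}$-Schur function of $V_{LC}$ and $f^R_{V_{CR}}$ is the $U_{CR}$-Schur function of $V_{CR}$. In particular, the $U$-Schur function of $\mathscr{H}_C$ satisfies $f_{\mathscr{H}_C}=f^R_{\mathscr{H}_C}f^L_{\mathscr{H}_C}$.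
   Context: For a unitary operator $W$ on a Hilbert space $\mathscr{K}$ and a closed subspace $S\subset\mathscr{K}$ with orthogonal projection $P$, the $W$-Carathéodory function of $S$ is $F_S(z)=P(W+z\mathbb{1})(W-z\mathbb{1})^{-1}P$ restricted to $S$ ($z$ in the open unit disk $\mathbb{D}$), and the $W$-Schur function of $S$ is the analytic function on $\mathbb{D}$ with values in operators on $S$ given by $f_S(z)=z^{-1}(F_S(z)-\mathbb{1}_S)(F_S(z)+\mathbb{1}_S)^{-1}$ (equivalently, $f_S(z)=P(W-z(\mathbb{1}-P))^{-1}P$ restricted to $S$). All functions in the factorization are regarded as operators on $V$, with direct sums taken with respect to $V=V_L\oplus V_{CR}=V_{LC}\oplus V_R$; $\mathbb{1}_X$ is the identity on $X$. *)

(* Defs.v *)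
From Stdlib Require Import ClassicalEpsilon.
From mathcomp Require Import all_boot all_algebra.
From mathcomp Require Import reals.
From mathcomp.real_closed Require Import complex.
Import GRing.Theory Num.Theory.
Set Implicit Arguments. Unset Strict Implicit. Unset Printing Implicit Defensive.
Local Open Scope ring_scope.

Section Hilbert.
Variables (R : realType) (H : lmodType R[i]) (ip : H -> H -> R[i]).

Definition is_hilbert : Prop :=
  [/\ (forall (a : R[i]) x y w, ip (a *: x + y) w = a * ip x w + ip y w),
      (forall x y, ip y x = (ip x y)^*),
      (forall x, 0 <= ip x x),
      (forall x, ip x x = 0 -> x = 0) &
      (forall u : nat -> H,
        (forall e : R, 0 < e -> exists N, forall m n, (N <= m)%N -> (N <= n)%N ->
           `|ip (u m - u n) (u m - u n)| < (e%:C)%C) ->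
        exists l : H, forall e : R, 0 < e -> exists N, forall n, (N <= n)%N ->
           `|ip (u n - l) (u n - l)| < (e%:C)%C)].

(* Closed subspaces are represented by their orthogonal projections. *)
Definition orthproj (P : H -> H) : Prop :=
  [/\ (forall (a : R[i]) x y, P (a *: x + y) = a *: P x + P y),
      (forall x, P (P x) = P x) &
      (forall x y, ip (P x) y = ip x (P y))].

Definition inS (P : H -> H) (x : H) : Prop := P x = x.

(* W is a unitary operator on the closed subspace K (projection PK);
   the values of W outside K are irrelevant. *)
Definition unitary_on (PK W : H -> H) : Prop :=
  [/\ (forall (a : R[i]) x y, inS PK x -> inS PK y -> W (a *: x + y) = a *: W x + W y),
      (forall x, inS PK x -> inS PK (W x)),
      (forall x y, inS PK x -> inS PK y -> ip (W x) (W y) = ip x y) &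
      (forall y, inS PK y -> exists x, inS PK x /\ W x = y)].

(* W-Schur function of the closed subspace S (projection P) of the Hilbert
   space K (projection PK), W unitary on K:
     f_S(z) = P (W - z (1_K - P))^{-1} P  restricted to S. *)
Definition schur (PK W P : H -> H) (z : R[i]) (x : H) : H :=
  P (epsilon (inhabits 0) (fun y => inS PK y /\ W y - z *: (y - P y) = x)).

End Hilbert.

(* Main.v *)
Require Import Defs.
From Stdlib Require Import ClassicalEpsilon FunctionalExtensionality.
From mathcomp Require Import all_boot all_order all_algebra.
From mathcomp Require Import reals.
From mathcomp.real_closed Require Import complex.
From mathcomp Require Import ring lra.
Import Order.TTheory GRing.Theory Num.Theory.
Set Implicit Arguments. Unset Strict Implicit. Unset Printing Implicit Defensive.
Local Open Scope ring_scope.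

Section Basics.
Local Open Scope complex_scope.
Variables (R : realType) (H : lmodType R[i]) (ip : H -> H -> R[i]).
Hypothesis Hh : is_hilbert ip.

Definition cj (a : R[i]) : R[i] := conjc a.
Lemma cjD (a b : R[i]) : cj (a + b) = cj a + cj b. Proof. exact: rmorphD. Qed.
Lemma cjM (a b : R[i]) : cj (a * b) = cj a * cj b. Proof. exact: rmorphM. Qed.
Lemma cjN (a : R[i]) : cj (- a) = - cj a. Proof. exact: rmorphN. Qed.
Lemma cj0 : cj 0 = 0. Proof. exact: rmorph0. Qed.
Lemma ipDZl a x y w : ip (a *: x + y) w = a * ip x w + ip y w.
Proof. by case: Hh => ? ? ? ? ?; auto. Qed.
Lemma ipC x y : ip y x = cj (ip x y).
Proof. by case: Hh => _ h _ _ _; exact: h. Qed.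
Lemma ip_ge0 x : 0 <= ip x x.
Proof. by case: Hh => ? ? ? ? ?; auto. Qed.
Lemma ip_eq0 x : ip x x = 0 -> x = 0.
Proof. by case: Hh => ? ? ? ? ?; auto. Qed.

Lemma ip0l w : ip 0 w = 0.
Proof.
have := ipDZl 1 0 0 w; rewrite scaler0 addr0 mul1r => h.
have : ip 0 w + ip 0 w - ip 0 w = ip 0 w - ip 0 w by rewrite -h.
by rewrite addrK subrr.
Qed.
Lemma ipDl x y w : ip (x + y) w = ip x w + ip y w.
Proof. by have := ipDZl 1 x y w; rewrite scale1r mul1r. Qed.
Lemma ipZl a x w : ip (a *: x) w = a * ip x w.
Proof. by have := ipDZl a x 0 w; rewrite addr0 ip0l addr0. Qed.
Lemma ipNl x w : ip (- x) w = - ip x w.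
Proof. by rewrite -scaleN1r ipZl mulN1r. Qed.
Lemma ipBl x y w : ip (x - y) w = ip x w - ip y w.
Proof. by rewrite ipDl ipNl. Qed.
Lemma ipDr x y w : ip w (x + y) = ip w x + ip w y.
Proof. by rewrite ipC ipDl cjD -!ipC. Qed.
Lemma ipZr a x w : ip w (a *: x) = cj a * ip w x.
Proof. by rewrite ipC ipZl cjM -!ipC. Qed.
Lemma ip0r w : ip w 0 = 0.
Proof. by rewrite ipC ip0l cj0. Qed.
Lemma ipNr x w : ip w (- x) = - ip w x.
Proof. by rewrite ipC ipNl cjN -ipC. Qed.
Lemma ipBr x y w : ip w (x - y) = ip w x - ip w y.
Proof. by rewrite ipDr ipNr. Qed.

Definition qn x : R := complex.Re (ip x x).
Lemma ipq x : ip x x = (qn x)%:C.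
Proof.
have h := ip_ge0 x; rewrite [LHS]complexE /qn (ger0_Im h) mulr0 addr0 //.
Qed.
Lemma qn_ge0 x : 0 <= qn x.
Proof. by rewrite -ler0c -ipq ip_ge0. Qed.
Lemma qn_eq0 x : qn x = 0 -> x = 0.
Proof. by move=> h; apply: ip_eq0; rewrite ipq h. Qed.
Lemma qn0 : qn 0 = 0.
Proof. by rewrite /qn ip0l. Qed.


Lemma cjR (c : R) : cj c%:C = c%:C.
Proof. by rewrite /cj /= oppr0. Qed.

Lemma qn_exp a b (c : R) :
  qn (a + c%:C *: b) = qn a + c * (2 * complex.Re (ip a b)) + c * c * qn b.
Proof.
rewrite /qn ipDl !ipDr !ipZl !ipZr cjR (ipC b a).
rewrite !ipq /cj; case: (ip b a) => u1 u2.
rewrite /=; ring.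
Qed.

Lemma qn_addle a b (u : R) : 0 < u -> qn (a + b) <= (1 + u^-1) * qn a + (1 + u) * qn b.
Proof.
move=> u0.
have h1 := qn_exp a b 1.
have e1 : (1:R)%:C *: b = b by rewrite scale1r.
rewrite e1 in h1.
have h2 := qn_exp a b (- u).
have h3 := qn_ge0 (a + (- u)%:C *: b).
rewrite h2 in h3; rewrite h1.
set s := complex.Re (ip a b) in h3 *.
set w := u^-1.
have wu : u * w = 1 by rewrite /w mulfV // lt0r_neq0.
have w0 : 0 < w by rewrite /w invr_gt0.
have := qn_ge0 a; have := qn_ge0 b.
nra.
Qed.

Lemma qn_N a : qn (- a) = qn a.
Proof. by rewrite /qn ipNl ipNr opprK. Qed.
Lemma qn_subC a b : qn (a - b) = qn (b - a).
Proof. by rewrite -qn_N opprB. Qed.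

Lemma qn_scale (c : R[i]) a :
  qn (c *: a) = (complex.Re c ^+ 2 + complex.Im c ^+ 2) * qn a.
Proof.
rewrite /qn ipZl ipZr ipq /cj; case: c => c1 c2 /=; ring.
Qed.

Lemma norm_lt1 (z : R[i]) : `|z| < 1 -> complex.Re z ^+ 2 + complex.Im z ^+ 2 < 1.
Proof.
rewrite normc_def.
have -> : (1 : R[i]) = (1 : R)%:C by [].
rewrite ltcR => h.
set v := _ + _ in h *.
have v0 : 0 <= v by rewrite /v addr_ge0 // sqr_ge0.
have := sqr_sqrtr v0; have := sqrtr_ge0 v.
set t := Num.sqrt v in h *.
move=> t0 <-. nra.
Qed.

Lemma bernoulli (d : R) n : 0 <= d -> 1 + n%:R * d <= (1 + d) ^+ n.
Proof.
move=> d0; elim: n => [|n IH]; first by rewrite mul0r addr0 expr0.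
rewrite exprS -natr1.
have h : 0 <= n%:R * d :> R by rewrite mulr_ge0.
nra.
Qed.

Lemma geo (r C e : R) : 0 <= r -> r < 1 -> 0 < e -> exists N, C * r ^+ N < e.
Proof.
move=> r0 r1 e0.
case: (lerP C 0) => hC.
  exists 0%N; rewrite expr0 mulr1; exact: le_lt_trans hC e0.
case: (eqVneq r 0) => [->|rn0].
  by exists 1%N; rewrite expr1 mulr0.
have rp : 0 < r by rewrite lt_neqAle eq_sym rn0.
set d := r^-1 - 1.
have d0 : 0 < d by rewrite /d subr_gt0 invf_gt1.
have rd : r * (1 + d) = 1 by rewrite /d addrC subrK mulfV // lt0r_neq0.
have ed : 0 < e * d by rewrite mulr_gt0.
have := archi_boundP (ltW (divr_gt0 hC ed)).
set N := Num.bound _ => hN.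
exists N.
have hb := bernoulli N (ltW d0).
have hrN : r ^+ N * (1 + d) ^+ N = 1 by rewrite -exprMn rd expr1n.
have hC' : C < N%:R * (e * d).
  by rewrite -ltr_pdivrMr.
have hrN0 : 0 <= r ^+ N by rewrite exprn_ge0 // ltW.
have hN0 : 0 <= N%:R :> R by [].
have hp : 0 < r ^+ N by rewrite exprn_gt0.
set p := r ^+ N in hrN hrN0 hp *.
set B := (1 + d) ^+ N in hb hrN *.
have h1 : C * p <= N%:R * (e * d) * p by rewrite ler_wpM2r // ltW.
have h2 : e * (1 + N%:R * d) * p <= e * B * p.
  by rewrite ler_wpM2r // ler_wpM2l // ltW.
have h3 : e * B * p = e by rewrite -mulrA (mulrC B) hrN mulr1.
have h4 : 0 < e * p by rewrite mulr_gt0.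
lra.
Qed.
Definition lin (f : H -> H) := forall a x y, f (a *: x + y) = a *: f x + f y.

Section Lin.
Variable f : H -> H.
Hypothesis hf : lin f.
Lemma lin0 : f 0 = 0.
Proof.
have := hf 1 0 0; rewrite scaler0 addr0 scale1r => h.
have : f 0 + f 0 - f 0 = f 0 - f 0 by rewrite -h.
by rewrite addrK subrr.
Qed.
Lemma linD x y : f (x + y) = f x + f y.
Proof. by have := hf 1 x y; rewrite !scale1r. Qed.
Lemma linZ a x : f (a *: x) = a *: f x.
Proof. by have := hf a x 0; rewrite !addr0 lin0 addr0. Qed.
Lemma linN x : f (- x) = - f x.
Proof. by rewrite -scaleN1r linZ scaleN1r. Qed.
Lemma linB x y : f (x - y) = f x - f y.
Proof. by rewrite linD linN. Qed.
End Lin.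

Lemma proj_lin P : orthproj ip P -> lin P.
Proof. by case. Qed.
Lemma proj_idem P x : orthproj ip P -> P (P x) = P x.
Proof. by case=> _ h _; exact: h. Qed.
Lemma proj_sa P x y : orthproj ip P -> ip (P x) y = ip x (P y).
Proof. by case=> _ _ h; exact: h. Qed.

Lemma proj_pyth P x : orthproj ip P -> qn x = qn (P x) + qn (x - P x).
Proof.
move=> hP.
have e : ip (P x) (x - P x) = 0.
  by rewrite ipBr [X in _ - X](proj_sa _ _ hP) (proj_idem _ hP) (proj_sa _ _ hP) subrr.
have e' : ip (x - P x) (P x) = 0 by rewrite ipC e cj0.
have -> : qn x = qn (P x + (x - P x)) by rewrite addrC subrK.
move: e e'; set m := x - P x => e e'.
clearbody m; rewrite /qn ipDl !ipDr e e' addr0 add0r.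
by case: (ip (P x) (P x)) => ? ?; case: (ip m m).

Qed.
Lemma proj_le P x : orthproj ip P -> qn (P x) <= qn x.
Proof. move=> hP; rewrite (proj_pyth x hP) lerDl; exact: qn_ge0. Qed.
Lemma proj_le' P x : orthproj ip P -> qn (x - P x) <= qn x.
Proof. move=> hP; rewrite (proj_pyth x hP) lerDr; exact: qn_ge0. Qed.

Lemma comp0_sym P Q : orthproj ip P -> orthproj ip Q ->
  (forall x, P (Q x) = 0) -> forall x, Q (P x) = 0.
Proof.
move=> hP hQ h x; apply: ip_eq0.
rewrite (proj_sa _ _ hQ) (proj_idem _ hQ) -(proj_idem x hP) (proj_sa _ _ hP).
by rewrite h ip0r.
Qed.

Lemma qn_le2 a b : qn (a + b) <= 2 * qn a + 2 * qn b.
Proof. by have := qn_addle a b ltr01; rewrite invr1 => h; lra. Qed.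

Lemma small0 (v : R) : 0 <= v -> (forall e, 0 < e -> v < 4 * e) -> v = 0.
Proof.
move=> v0 h; apply/eqP; rewrite eq_le v0 andbT; apply/negP => /negP.
rewrite -ltNge => vp.
have := h (v / 4); rewrite divr_gt0 // => /(_ isT).
by rewrite mulrC divfK ?ltxx // pnatr_eq0.
Qed.

Lemma normq w : `|ip w w| = (qn w)%:C.
Proof. by rewrite ipq ger0_norm // ler0c qn_ge0. Qed.

Lemma complete (u : nat -> H) :
  (forall e, 0 < e -> exists N, forall m n, (N <= m)%N -> (N <= n)%N -> qn (u m - u n) < e) ->
  exists l, forall e, 0 < e -> exists N, forall n, (N <= n)%N -> qn (u n - l) < e.
Proof.
move=> hc.
have hcomp : forall u : nat -> H,
        (forall e : R, 0 < e -> exists N, forall m n, (N <= m)%N -> (N <= n)%N ->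
           `|ip (u m - u n) (u m - u n)| < (e%:C)%C) ->
        exists l : H, forall e : R, 0 < e -> exists N, forall n, (N <= n)%N ->
           `|ip (u n - l) (u n - l)| < (e%:C)%C.
  by case: Hh => _ _ _ _ h; exact: h.
case: (hcomp u) => [e e0|l hl].
  have [N hN] := hc e e0; exists N => m n hm hn.
  by rewrite normq ltcR; apply: hN.
exists l => e e0; have [N hN] := hl e e0; exists N => n hn.
by have := hN n hn; rewrite normq ltcR.
Qed.

Section Unit.
Variables (PK W : H -> H).
Hypotheses (hPK : orthproj ip PK) (hW : unitary_on ip PK W).

Lemma inS0 : inS PK 0.
Proof. exact: (lin0 (proj_lin hPK)). Qed.
Lemma inSD x y : inS PK x -> inS PK y -> inS PK (x + y).
Proof. by rewrite /inS (linD (proj_lin hPK)) => -> ->. Qed.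
Lemma inSZ a x : inS PK x -> inS PK (a *: x).
Proof. by rewrite /inS (linZ (proj_lin hPK)) => ->. Qed.
Lemma inSN x : inS PK x -> inS PK (- x).
Proof. by rewrite /inS (linN (proj_lin hPK)) => ->. Qed.
Lemma inSB x y : inS PK x -> inS PK y -> inS PK (x - y).
Proof. by move=> hx hy; apply: inSD => //; apply: inSN. Qed.
Lemma inSP y : inS PK (PK y).
Proof. exact: proj_idem. Qed.

Lemma WDZ a x y : inS PK x -> inS PK y -> W (a *: x + y) = a *: W x + W y.
Proof. by case: hW => h _ _ _; exact: h. Qed.
Lemma WK x : inS PK x -> inS PK (W x).
Proof. by case: hW => _ h _ _; exact: h. Qed.
Lemma Wip x y : inS PK x -> inS PK y -> ip (W x) (W y) = ip x y.
Proof. by case: hW => _ _ h _; exact: h. Qed.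
Lemma Wsurj y : inS PK y -> exists x, inS PK x /\ W x = y.
Proof. by case: hW => _ _ _ h; exact: h. Qed.

Lemma WB x y : inS PK x -> inS PK y -> W (x - y) = W x - W y.
Proof.
move=> hx hy; have := WDZ (-1) hy hx.
by rewrite !scaleN1r addrC => ->; rewrite addrC.
Qed.
Lemma W0 : W 0 = 0.
Proof. by rewrite -(subrr 0) WB ?subrr //; exact: inS0. Qed.
Lemma Wq x : inS PK x -> qn (W x) = qn x.
Proof. by move=> hx; rewrite /qn Wip. Qed.
End Unit.

Section Solve.
Variables (PK W M : H -> H) (z : R[i]).
Hypotheses (hPK : orthproj ip PK) (hW : unitary_on ip PK W) (hM : lin M)
  (hMK : forall y, inS PK y -> inS PK (M y)) (hMq : forall y, qn (M y) <= qn y)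
  (hz : `|z| < 1).

Let r := complex.Re z ^+ 2 + complex.Im z ^+ 2.
Let r0 : 0 <= r.
Proof. by rewrite /r addr_ge0 // sqr_ge0. Qed.
Let r1 : r < 1.
Proof. exact: norm_lt1. Qed.
Let qz y : qn (z *: M y) <= r * qn y.
Proof. by rewrite qn_scale ler_wpM2l. Qed.

Lemma sol_uniq y1 y2 : inS PK y1 -> inS PK y2 ->
  W y1 - z *: M y1 = W y2 - z *: M y2 -> y1 = y2.
Proof.
move=> h1 h2 e.
have hd : inS PK (y1 - y2) by apply: inSB.
have eW : W (y1 - y2) = z *: M (y1 - y2).
  rewrite (WB hW h1 h2) (linB hM) scalerBr.
  rewrite -[W y1](subrK (z *: M y1)) e addrAC [W y2 - _ - _]addrAC subrr add0r.
  by rewrite addrC.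
have hq := qz (y1 - y2).
rewrite -eW (Wq hW hd) in hq.
have q0 := qn_ge0 (y1 - y2).
have rr := r1.
have : qn (y1 - y2) = 0.
  apply/eqP; rewrite eq_le q0 andbT.
  have : qn (y1 - y2) * (1 - r) <= 0 by nra.
  by rewrite pmulr_lle0 // subr_gt0.
by move/qn_eq0/eqP; rewrite subr_eq0 => /eqP.
Qed.

Definition winv v := epsilon (inhabits 0) (fun u => inS PK u /\ W u = v).
Lemma winvP v : inS PK v -> inS PK (winv v) /\ W (winv v) = v.
Proof.
move=> hv; rewrite /winv.
apply: (epsilon_spec (inhabits 0) (fun u => inS PK u /\ W u = v)).
exact: (Wsurj hW hv).
Qed.

Fixpoint sq (x : H) (n : nat) : H :=
  if n is n'.+1 then winv (x + z *: M (sq x n')) else 0.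

Lemma sol_exists x : inS PK x -> exists y, inS PK y /\ W y - z *: M y = x.
Proof.
move=> hx.
pose s := sq x.
have hs : forall n, inS PK (s n).
  elim=> [|n IH]; first exact: (inS0 hPK).
  by case: (winvP (inSD hPK hx (inSZ hPK z (hMK IH)))).
have hWs n : W (s n.+1) = x + z *: M (s n).
  by case: (winvP (inSD hPK hx (inSZ hPK z (hMK (hs n))))).
pose D n := s n.+1 - s n.
have hDK n : inS PK (D n) := inSB hPK (hs _) (hs _).
have hD n : qn (D n.+1) <= r * qn (D n).
  have e : W (D n.+1) = z *: M (D n).
    rewrite /D (WB hW (hs _) (hs _)) !hWs (linB hM) scalerBr.
    by rewrite opprD addrACA subrr add0r.
  rewrite -(Wq hW (hDK _)) e; exact: qz.
have hDn n : qn (D n) <= r ^+ n * qn (D 0).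
  elim: n => [|n IH]; first by rewrite expr0 mul1r.
  apply: le_trans (hD n) _; rewrite exprS -mulrA; exact: ler_wpM2l.
set q0 := qn (D 0) in hDn.
have q00 : 0 <= q0 := qn_ge0 _.
have rr0 := r0; have rr1 := r1.
pose u := 1 - r.
have u0 : 0 < u by rewrite /u subr_gt0.
pose s' := (2 - r) * r.
have s'1 : 0 < 1 - s' by rewrite /s'; nra.
pose A := (1 + u^-1) * q0.
have A0 : 0 <= A by rewrite /A mulr_ge0 // addr_ge0 // ltW // invr_gt0.
pose C := A / (1 - s').
have C0 : 0 <= C by rewrite /C divr_ge0 // ltW.
have eC : C * (1 - s') = A by rewrite /C divfK // lt0r_neq0.
have hC : forall k n, qn (s (n + k)%N - s n) <= C * r ^+ n.
  elim=> [|k IH] n.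
    by rewrite addn0 subrr qn0 mulr_ge0 // exprn_ge0.
  have -> : s (n + k.+1)%N - s n = D n + (s (n.+1 + k)%N - s n.+1).
    by rewrite /D addnS -addSn [RHS]addrC addrA subrK.
  apply: le_trans (qn_addle _ _ u0) _.
  have i1 := IH n.+1; have i2 := hDn n.
  set p := r ^+ n in i2 *.
  rewrite exprS in i1; rewrite -/p in i1.
  have p0 : 0 <= p by rewrite exprn_ge0.
  have e1 : (1 + u^-1) * qn (D n) <= A * p.
    rewrite /A -mulrA (mulrC q0) ler_wpM2l // addr_ge0 // ltW // invr_gt0 //.
  have e2 : (1 + u) * qn (s (n.+1 + k)%N - s n.+1) <= s' * (C * p).
    apply: le_trans (_ : (1 + u) * (C * (r * p)) <= _).
      by rewrite ler_wpM2l // addr_ge0 // ltW.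
    have -> : (1 + u) * (C * (r * p)) = ((1 + u) * r) * (C * p) by ring.
    by rewrite /s' /u; apply: ler_wpM2r; [rewrite mulr_ge0|nra].
  have e4 : C * p = A * p + s' * (C * p).
    by rewrite -eC; ring.
  lra.
have hcauchy : forall e, 0 < e -> exists N, forall m n, (N <= m)%N -> (N <= n)%N ->
    qn (s m - s n) < e.
  move=> e e0; have [N hN] := geo C rr0 rr1 e0.
  exists N => m n hm hn.
  have key : forall m n, (N <= n)%N -> (n <= m)%N -> qn (s m - s n) < e.
    move=> m' n' hn' hmn'.
    rewrite -(subnKC hmn').
    apply: le_lt_trans (hC _ _) _.
    apply: le_lt_trans hN.
    by rewrite ler_wpM2l // ler_wiXn2l // ltW.
  case: (leqP n m) => hnm; first exact: key.
  by rewrite qn_subC; apply: key => //; apply: ltnW.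
have [l hl] := complete hcauchy.
have lK : inS PK l.
  apply/eqP; rewrite -subr_eq0; apply/eqP; apply: qn_eq0.
  apply: small0; first exact: qn_ge0.
  move=> e e0; have [N hN] := hl e e0.
  have -> : PK l - l = PK (l - s N) + (s N - l).
    by rewrite (linB (proj_lin hPK)) (hs N) addrA subrK.
  apply: le_lt_trans (qn_le2 _ _) _.
  have := proj_le (l - s N) hPK; have := hN N (leqnn N).
  rewrite qn_subC; lra.
exists l; split => //.
apply/eqP; rewrite -subr_eq0; apply/eqP; apply: qn_eq0.
apply: small0; first exact: qn_ge0.
move=> e e0; have [N hN] := hl e e0.
have -> : W l - z *: M l - x = W (l - s N.+1) + z *: M (s N - l).
  rewrite (WB hW lK (hs _)) hWs (linB hM) scalerBr.
  by rewrite opprD !addrA subrK addrAC.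
apply: le_lt_trans (qn_le2 _ _) _.
rewrite (Wq hW (inSB hPK lK (hs _))).
have h1 := qz (s N - l).
have h2 := hMq (s N - l).
have h3 := hN N (leqnn N).
have h4 := hN N.+1 (leqnSn N).
rewrite qn_subC in h4.
have h5 := qn_ge0 (s N - l).
have h6 : r * qn (s N - l) <= qn (s N - l) by rewrite ler_piMl // ltW.
lra.
Qed.

End Solve.

Lemma schur_spec (PK W P : H -> H) (z : R[i]) (x : H) : orthproj ip PK -> unitary_on ip PK W -> orthproj ip P ->
  (forall y, inS PK y -> inS PK (P y)) -> `|z| < 1 -> inS PK x ->
  exists y, [/\ inS PK y, W y - z *: (y - P y) = x, schur PK W P z x = P y &
    forall y', inS PK y' -> W y' - z *: (y' - P y') = x -> y' = y].
Proof.
move=> hPK hW hP hPK' hz hx.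
pose M := fun y => y - P y.
have hM : lin M.
  move=> a u w; rewrite /M (proj_lin hP) scalerBr opprD addrACA.
  by rewrite -!addrA; congr (_ + _); rewrite !addrA; congr (_ + _); rewrite addrC.
have hMK : forall y, inS PK y -> inS PK (M y).
  by move=> y hy; apply: inSB => //; apply: hPK'.
have hMq : forall y, qn (M y) <= qn y by move=> y; exact: proj_le'.
have [y [hy ey]] := sol_exists hPK hW hM hMK hMq hz hx.
have uq : forall y', inS PK y' -> W y' - z *: (y' - P y') = x -> y' = y.
  move=> y' hy' ey'; apply: (sol_uniq hPK hW hM hMq hz hy' hy).
  by rewrite /M ey ey'.
exists y; split => //.
rewrite /schur; congr (P _); apply: uq.
- by have := epsilon_spec (inhabits 0) (fun y => inS PK y /\ W y - z *: (y - P y) = x)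
    (ex_intro _ y (conj hy ey)); case.
- by have := epsilon_spec (inhabits 0) (fun y => inS PK y /\ W y - z *: (y - P y) = x)
    (ex_intro _ y (conj hy ey)); case.
Qed.

Lemma schur_some (PK W P : H -> H) (z : R[i]) (x : H) :
  (exists y, inS PK y /\ W y - z *: (y - P y) = x) ->
  exists y, [/\ inS PK y, W y - z *: (y - P y) = x & schur PK W P z x = P y].
Proof.
move=> ex.
have := epsilon_spec (inhabits 0) (fun y => inS PK y /\ W y - z *: (y - P y) = x) ex.
set c := epsilon _ _ => -[h1 h2]; exists c; split => //.
Qed.

Lemma proj_sum P Q : orthproj ip P -> orthproj ip Q -> (forall x, P (Q x) = 0) ->
  orthproj ip (fun x => P x + Q x).
Proof.
move=> hP hQ hPQ; have hQP := comp0_sym hP hQ hPQ.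
have lP := proj_lin hP; have lQ := proj_lin hQ.
split.
- move=> a u w; rewrite lP lQ scalerDr addrACA.
  by rewrite -!addrA; congr (_ + _); rewrite !addrA; congr (_ + _); rewrite addrC.
- by move=> u; rewrite !(linD lP, linD lQ) hPQ hQP (proj_idem _ hP) (proj_idem _ hQ) addr0 add0r.
- by move=> u w; rewrite ipDl ipDr !proj_sa.
Qed.

End Basics.

Unset Implicit Arguments. Set Strict Implicit.
Ltac linsimp l := rewrite ?(linD l, linB l, linZ l, linN l).

Theorem theorem2p5 (R : realType) (H : lmodType R[i]) (ip : H -> H -> R[i])
  (PL PC PR ULC UCR : H -> H) :
  is_hilbert ip ->
  (* orthogonal decomposition H = H_L (+) H_C (+) H_R *)
  orthproj ip PL -> orthproj ip PC -> orthproj ip PR ->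
  (forall x, PL x + PC x + PR x = x) ->
  (forall x, PL (PC x) = 0 /\ PL (PR x) = 0 /\ PC (PL x) = 0 /\
             PC (PR x) = 0 /\ PR (PL x) = 0 /\ PR (PC x) = 0) ->
  (* U_LC unitary on H_LC = H_L (+) H_C, U_CR unitary on H_CR = H_C (+) H_R *)
  unitary_on ip (fun x => PL x + PC x) ULC ->
  unitary_on ip (fun x => PC x + PR x) UCR ->
  let PLC := fun x => PL x + PC x in
  let PCR := fun x => PC x + PR x in
  (* U = (U_LC (+) 1_{H_R}) (1_{H_L} (+) U_CR) *)
  let U := fun x => (fun y => ULC (PLC y) + PR y) (PL x + UCR (PCR x)) in
  (forall QL QR : H -> H,
     orthproj ip QL -> (forall x, PL (QL x) = QL x) ->   (* V_L closed in H_L *)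
     orthproj ip QR -> (forall x, PR (QR x) = QR x) ->   (* V_R closed in H_R *)
     let PV := fun x => QL x + PC x + QR x in            (* V = V_L (+) H_C (+) V_R *)
     let PVLC := fun x => QL x + PC x in                 (* V_LC = V_L (+) H_C *)
     let PVCR := fun x => PC x + QR x in                 (* V_CR = H_C (+) V_R *)
     forall z : R[i], `|z| < 1 -> forall x, inS PV x ->
       let y := schur PLC ULC PVLC z (PVLC x) + QR x in   (* (f^L (+) 1_{V_R}) x *)
       schur id U PV z x = QL y + schur PCR UCR PVCR z (PVCR y))
  /\
  (forall z : R[i], `|z| < 1 -> forall x, inS PC x ->
     schur id U PC z x = schur PCR UCR PC z (schur PLC ULC PC z x)).
Proof.
move=> hH hPL hPC hPR hsum horth hULC hUCR PLC PCR U.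
have o1 w : PL (PC w) = 0 by case: (horth w) => [? [? [? [? [? ?]]]]].
have o2 w : PL (PR w) = 0 by case: (horth w) => [? [? [? [? [? ?]]]]].
have o3 w : PC (PL w) = 0 by case: (horth w) => [? [? [? [? [? ?]]]]].
have o4 w : PC (PR w) = 0 by case: (horth w) => [? [? [? [? [? ?]]]]].
have o5 w : PR (PL w) = 0 by case: (horth w) => [? [? [? [? [? ?]]]]].
have o6 w : PR (PC w) = 0 by case: (horth w) => [? [? [? [? [? ?]]]]].
have lPL := proj_lin hPL; have lPC := proj_lin hPC; have lPR := proj_lin hPR.
have iPL w : PL (PL w) = PL w := proj_idem w hPL.
have iPC w : PC (PC w) = PC w := proj_idem w hPC.
have iPR w : PR (PR w) = PR w := proj_idem w hPR.
have decomp : forall w1 w2, PL w1 = PL w2 -> PC w1 = PC w2 -> PR w1 = PR w2 -> w1 = w2.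
  by move=> w1 w2 e1 e2 e3; rewrite -(hsum w1) -(hsum w2) e1 e2 e3.
have hPLC : orthproj ip PLC := proj_sum hH hPL hPC o1.
have hPCR : orthproj ip PCR := proj_sum hH hPC hPR o4.
have part1 : forall QL QR : H -> H,
     orthproj ip QL -> (forall x, PL (QL x) = QL x) ->
     orthproj ip QR -> (forall x, PR (QR x) = QR x) ->
     let PV := fun x => QL x + PC x + QR x in
     let PVLC := fun x => QL x + PC x in
     let PVCR := fun x => PC x + QR x in
     forall z : R[i], `|z| < 1 -> forall x, inS PV x ->
       let y := schur PLC ULC PVLC z (PVLC x) + QR x in
       schur id U PV z x = QL y + schur PCR UCR PVCR z (PVCR y).
  move=> QL QR hQL hQLL hQR hQRR PV PVLC PVCR z hz x hx y.
  have lQL := proj_lin hQL; have lQR := proj_lin hQR.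
  have iQL w : QL (QL w) = QL w := proj_idem w hQL.
  have iQR w : QR (QR w) = QR w := proj_idem w hQR.
  have pcql w : PC (QL w) = 0 by rewrite -hQLL o3.
  have prql w : PR (QL w) = 0 by rewrite -hQLL o5.
  have plqr w : PL (QR w) = 0 by rewrite -hQRR o2.
  have pcqr w : PC (QR w) = 0 by rewrite -hQRR o4.
  have qlpc := comp0_sym hH hPC hQL pcql.
  have qlpr := comp0_sym hH hPR hQL prql.
  have qrpl := comp0_sym hH hPL hQR plqr.
  have qrpc := comp0_sym hH hPC hQR pcqr.
  have qlpl w : QL (PL w) = QL w.
    by rewrite -{2}(hsum w) !(linD lQL) qlpc qlpr !addr0.
  have qrpr w : QR (PR w) = QR w.
    by rewrite -{2}(hsum w) !(linD lQR) qrpl qrpc !add0r.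
  have qrql w : QR (QL w) = 0 by rewrite -hQLL qrpl.
  have qlqr w : QL (QR w) = 0 by rewrite -hQRR qlpr.
  have hPVLC : orthproj ip PVLC := proj_sum hH hQL hPC qlpc.
  have hPVCR : orthproj ip PVCR := proj_sum hH hPC hQR pcqr.
  move: hx; rewrite /inS /PV => hx.
  have xPL : PL x = QL x.
    by rewrite -{1}hx !(linD lPL) hQLL o1 plqr !addr0.
  have xPR : PR x = QR x.
    by rewrite -{1}hx !(linD lPR) prql o6 hQRR !add0r.
  have hinvLC : forall w, inS PLC (PVLC w).
    move=> w; rewrite /inS /PLC /PVLC !(linD lPL, linD lPC) hQLL o1 pcql iPC.
    by rewrite addr0 add0r.
  have hinvCR : forall w, inS PCR (PVCR w).
    move=> w; rewrite /inS /PCR /PVCR !(linD lPC, linD lPR) iPC pcqr o6 hQRR.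
    by rewrite addr0 add0r.
  have [a [ha ea sa ua]] := schur_spec (x := PVLC x) hH hPLC hULC hPVLC
      (fun w _ => hinvLC w) hz (hinvLC x).
  have aPR : PR a = 0 by rewrite -ha (linD lPR) o5 o6 addr0.
  have ey : y = QL a + PC a + QR x by rewrite /y sa.
  clearbody y.
  have [b [hb eb sb ub]] := schur_spec (x := PVCR y) hH hPCR hUCR hPVCR
      (fun w _ => hinvCR w) hz (hinvCR y).
  have bPL : PL b = 0 by rewrite -hb (linD lPL) o1 o2 addr0.
  rewrite sb.
  have exU : exists c, inS id c /\ U c - z *: (c - PV c) = x.
    exists (PL a + b); split => //.
    set c := PL a + b.
    have bQL : QL b = 0 by rewrite -hb (linD lQL) qlpc qlpr addr0.
    have cPL : PL c = PL a by rewrite /c (linD lPL) iPL bPL addr0.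
    have cPC : PC c = PC b by rewrite /c (linD lPC) o3 add0r.
    have cPR : PR c = PR b by rewrite /c (linD lPR) o5 add0r.
    have cQL : QL c = QL a by rewrite /c (linD lQL) qlpl bQL addr0.
    have cQR : QR c = QR b by rewrite /c (linD lQR) qrpl add0r.
    have cPCR : PCR c = b.
      by rewrite /PCR /c !(linD lPC, linD lPR) o3 o5 !add0r.
    have ev : UCR b = PVCR y + z *: (b - PVCR b) by rewrite -eb subrK.
    have vK := WK hUCR hb.
    have vPL : PL (UCR b) = 0 by rewrite -vK /PCR (linD lPL) o1 o2 addr0.
    have yPC : PC y = PC a by rewrite ey !(linD lPC) pcql iPC pcqr addr0 add0r.
    have yQR : QR y = QR x by rewrite ey !(linD lQR) qrql qrpc iQR !add0r.
    have vPC : PC (UCR b) = PC a.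
      rewrite ev /PVCR; linsimp lPC; rewrite !iPC !pcqr yPC !addr0 subrr scaler0.
      by rewrite addr0.
    have vPR : PR (UCR b) = QR x + z *: (PR b - QR b).
      rewrite ev /PVCR; linsimp lPR; rewrite !o6 !hQRR yQR !add0r.
      done.
    have eUa : ULC a = PVLC x + z *: (a - PVLC a) by rewrite -ea subrK.
    have eUc : U c = ULC a + PR (UCR b).
      rewrite /U /= cPCR; congr (ULC _ + _).
        rewrite /PLC !(linD lPL, linD lPC) ?(vPL, vPC, iPL, o3, bPL, lin0 lPL, lin0 lPC, addr0, add0r).
        done.
      by rewrite (linD lPR) o5 add0r.
    rewrite eUc eUa /PVLC /PV.
    clearbody c.
    apply: decomp.
    - linsimp lPL.
      rewrite ?(iPL, iPC, iPR, iQL, iQR, o1, o2, o3, o4, o5, o6, hQLL, hQRR, pcql, prql,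
        plqr, pcqr, qlpc, qlpr, qrpl, qrpc, qlpl, qrpr, qrql, qlqr, lin0 lPL, lin0 lPC,
        lin0 lPR, lin0 lQL, lin0 lQR, cPL, cPC, cPR, cQL, cQR, vPL, vPC, vPR, bPL, aPR,
        xPL, xPR, oppr0, scaler0, addr0, add0r, subr0, sub0r, subrr, addrK).
      done.
    - linsimp lPC.
      rewrite ?(iPL, iPC, iPR, iQL, iQR, o1, o2, o3, o4, o5, o6, hQLL, hQRR, pcql, prql,
        plqr, pcqr, qlpc, qlpr, qrpl, qrpc, qlpl, qrpr, qrql, qlqr, lin0 lPL, lin0 lPC,
        lin0 lPR, lin0 lQL, lin0 lQR, cPL, cPC, cPR, cQL, cQR, vPL, vPC, vPR, bPL, aPR,
        xPL, xPR, oppr0, scaler0, addr0, add0r, subr0, sub0r, subrr, addrK).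
      done.
    - linsimp lPR.
      rewrite ?(iPL, iPC, iPR, iQL, iQR, o1, o2, o3, o4, o5, o6, hQLL, hQRR, pcql, prql,
        plqr, pcqr, qlpc, qlpr, qrpl, qrpc, qlpl, qrpr, qrql, qlqr, lin0 lPL, lin0 lPC,
        lin0 lPR, lin0 lQL, lin0 lQR, cPL, cPC, cPR, cQL, cQR, vPL, vPC, vPR, bPL, aPR,
        xPL, xPR, oppr0, scaler0, addr0, add0r, subr0, sub0r, subrr, addrK).
      done.
  have [c [_ ec sc]] := schur_some exU.
  rewrite sc.
  set bb := PCR c.
  have hbb : inS PCR bb := proj_idem c hPCR.
  have bbPL : PL bb = 0 by rewrite /bb /PCR (linD lPL) o1 o2 addr0.
  have bbPC : PC bb = PC c by rewrite /bb /PCR (linD lPC) iPC o4 addr0.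
  have bbPR : PR bb = PR c by rewrite /bb /PCR (linD lPR) iPR o6 add0r.
  have bbQL : QL bb = 0 by rewrite /bb /PCR (linD lQL) qlpc qlpr addr0.
  have bbQR : QR bb = QR c by rewrite /bb /PCR (linD lQR) qrpr qrpc add0r.
  have ebb : PCR c = bb by [].
  clearbody bb.
  set v := UCR bb.
  have ev : UCR bb = v by [].
  have vK : inS PCR v := WK hUCR hbb.
  have vPL : PL v = 0 by rewrite -vK /PCR (linD lPL) o1 o2 addr0.
  clearbody v.
  set aa := PL c + PC v.
  have aaPL : PL aa = PL c by rewrite /aa (linD lPL) iPL o1 addr0.
  have aaPC : PC aa = PC v by rewrite /aa (linD lPC) iPC o3 add0r.
  have aaPR : PR aa = 0 by rewrite /aa (linD lPR) o5 o6 addr0.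
  have aaQL : QL aa = QL c by rewrite /aa (linD lQL) qlpl qlpc addr0.
  have haa : inS PLC aa by rewrite /inS /PLC aaPL aaPC.
  have eUc : U c = ULC aa + PR v.
    rewrite /U /= ebb ev; congr (ULC _ + _).
      by rewrite /PLC !(linD lPL, linD lPC) iPL vPL o3 addr0 add0r.
    by rewrite (linD lPR) o5 add0r.
  have eaa : PL c + PC v = aa by [].
  clearbody aa.
  have uK := WK hULC haa.
  have uPR : PR (ULC aa) = 0 by rewrite -uK /PLC (linD lPR) o5 o6 addr0.
  rewrite eUc /PV in ec.
  have cL := congr1 PL ec; have cC := congr1 PC ec; have cR := congr1 PR ec.
  move: cL cC cR; linsimp lPL; linsimp lPC; linsimp lPR.
  rewrite ?(iPL, iPC, iPR, iQL, iQR, o1, o2, o3, o4, o5, o6, hQLL, hQRR, pcql, prql,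
        plqr, pcqr, qlpc, qlpr, qrpl, qrpc, qlpl, qrpr, qrql, qlqr, lin0 lPL, lin0 lPC,
        lin0 lPR, lin0 lQL, lin0 lQR, bbPL, bbPC, bbPR, bbQL, bbQR, vPL, aaPL, aaPC, aaPR, aaQL, uPR,
        xPL, xPR, oppr0, scaler0, addr0, add0r, subr0, sub0r, subrr, addrK) => cL cC cR.
  have eLC : ULC aa - z *: (aa - PVLC aa) = PVLC x.
    rewrite /PVLC; apply: decomp; [linsimp lPL|linsimp lPC|linsimp lPR];
    rewrite ?(iPL, iPC, iPR, iQL, iQR, o1, o2, o3, o4, o5, o6, hQLL, hQRR, pcql, prql,
        plqr, pcqr, qlpc, qlpr, qrpl, qrpc, qlpl, qrpr, qrql, qlqr, lin0 lPL, lin0 lPC,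
        lin0 lPR, lin0 lQL, lin0 lQR, bbPL, bbPC, bbPR, bbQL, bbQR, vPL, aaPL, aaPC, aaPR, aaQL, uPR,
        xPL, xPR, oppr0, scaler0, addr0, add0r, subr0, sub0r, subrr, addrK) .
    all: try (first [done | exact: cL | exact: cC]).
  have aE := ua aa haa eLC.
  have yPC : PC y = PC v.
    by rewrite ey -aE !(linD lPC) pcql iPC pcqr aaPC addr0 add0r.
  have yQR : QR y = QR x.
    by rewrite ey !(linD lQR) qrql qrpc iQR !add0r.
  have eCR : UCR bb - z *: (bb - PVCR bb) = PVCR y.
    rewrite ev /PVCR; apply: decomp; [linsimp lPL|linsimp lPC|linsimp lPR];
    rewrite ?(iPL, iPC, iPR, iQL, iQR, o1, o2, o3, o4, o5, o6, hQLL, hQRR, pcql, prql,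
        plqr, pcqr, qlpc, qlpr, qrpl, qrpc, qlpl, qrpr, qrql, qlqr, lin0 lPL, lin0 lPC,
        lin0 lPR, lin0 lQL, lin0 lQR, bbPL, bbPC, bbPR, bbQL, bbQR, vPL, aaPL, aaPC, aaPR, aaQL, uPR, yPC, yQR,
        xPL, xPR, oppr0, scaler0, addr0, add0r, subr0, sub0r, subrr, addrK) //.
  have bE := ub bb hbb eCR.
  rewrite /PV /PVCR ey -aE -bE; linsimp lQL.
  rewrite ?(iPL, iPC, iPR, iQL, iQR, o1, o2, o3, o4, o5, o6, hQLL, hQRR, pcql, prql,
        plqr, pcqr, qlpc, qlpr, qrpl, qrpc, qlpl, qrpr, qrql, qlqr, lin0 lPL, lin0 lPC,
        lin0 lPR, lin0 lQL, lin0 lQR, bbPL, bbPC, bbPR, bbQL, bbQR, vPL, aaPL, aaPC, aaPR, aaQL, uPR, yPC, yQR,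
        xPL, xPR, oppr0, scaler0, addr0, add0r, subr0, sub0r, subrr, addrK).
  by rewrite addrA.
split; first exact: part1.
move=> z hz x hx.
have h0 : orthproj ip (fun _ : H => 0).
  split => //; first by move=> *; rewrite scaler0 addr0.
  by move=> *; rewrite (ip0l hH) (ip0r hH).
have := part1 (fun _ => 0) (fun _ => 0) h0 (fun _ => lin0 lPL) h0 (fun _ => lin0 lPR) z hz x.
rewrite /inS add0r addr0 => /(_ hx) /=.
have e1 : (fun w : H => 0 + PC w + 0) = PC.
  by apply: functional_extensionality => w; rewrite add0r addr0.
have e2 : (fun w : H => PC w + 0) = PC.
  by apply: functional_extensionality => w; rewrite addr0.
have e3 : (fun w : H => 0 + PC w) = PC.
  by apply: functional_extensionality => w; rewrite add0r.
rewrite e1 e2 e3 !addr0 add0r hx.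
by rewrite {2}/schur iPC.
Qed.
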